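(* Let $H$ be a Hermitian operator on $\mathcal H_a\otimes\mathcal H_b$ (finite-dimensional). Then $\mathcal C_{\rm P}^{1}(H)=\|H\|_\infty$ if and only if both the eigenspace of $H$ for its smallest eigenvalue and the eigenspace of $H$ for its largest eigenvalue contain a product vector $\ket{\phi}_a\otimes\ket{\psi}_b$.
   Context: For a density operator $\rho$ on $\mathcal H_a\otimes\mathcal H_b$, the parallel capacity is $\mathcal C_{\rm P}(\rho,H):=\max_{U_a,U_b}\mathrm{tr}[(U_a\otimes U_b)\rho(U_a\otimes U_b)^\dagger H]-\min_{U_a,U_b}\mathrm{tr}[(U_a\otimes U_b)\rho(U_a\otimes U_b)^\dagger H]$, where $U_a,U_b$ range over all unitaries on $\mathcal H_a$, $\mathcal H_b$ respectively. Let $\mathcal S^1$ be the set of separable density operators on $\mathcal H_a\otimes\mathcal H_b$, and $\mathcal C_{\rm P}^1(H):=\max_{\rho\in\mathcal S^1}\mathcal C_{\rm P}(\rho,H)$. With $E_0,E_{\max}$ the smallest and largest eigenvalues of $H$, $\|H\|_\infty:=E_{\max}-E_0$. *)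

(* Defs.v *)
From HB Require Import structures.
From mathcomp Require Import all_boot all_order all_algebra.
From mathcomp Require Import classical_sets reals.
From mathcomp Require Import complex mxtens.

Set Implicit Arguments.
Unset Strict Implicit.
Unset Printing Implicit Defensive.

Import Order.TTheory GRing.Theory Num.Theory.
Local Open Scope ring_scope.
Local Open Scope classical_set_scope.
Local Open Scope sesquilinear_scope.

Section QDefs.
Variable R : realType.
Local Notation C := R[i].

Definition RtoC (x : R) : C := Complex x 0.

Definition is_hermitian n (A : 'M[C]_n) : Prop := A \is hermsymmx.

Definition psd n (A : 'M[C]_n) : Prop :=
  is_hermitian A /\ forall v : 'cV[C]_n, 0 <= (v ^t* *m A *m v) 0 0.

Definition density n (rho : 'M[C]_n) : Prop := psd rho /\ \tr rho = 1.

Definition unitary n (U : 'M[C]_n) : Prop := U \is unitarymx.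

(* the set { tr[(Ua (x) Ub) rho (Ua (x) Ub)^dagger H] : Ua, Ub unitary }
   (real parts; the values are real for Hermitian rho, H) *)
Definition local_energies da db (rho H : 'M[C]_(da * db)) : set R :=
  [set x | exists (Ua : 'M[C]_da) (Ub : 'M[C]_db),
     unitary Ua /\ unitary Ub /\
     x = @complex.Re R (\tr ((Ua *t Ub) *m rho *m (Ua *t Ub) ^t* *m H))].

Definition CP da db (rho H : 'M[C]_(da * db)) : R :=
  sup (local_energies rho H) - inf (local_energies rho H).

Definition separable da db (rho : 'M[C]_(da * db)) : Prop :=
  exists (k : nat) (p : 'I_k -> R) (ra : 'I_k -> 'M[C]_da) (rb : 'I_k -> 'M[C]_db),
    (forall i, 0 <= p i) /\ \sum_(i < k) p i = 1 /\
    (forall i, density (ra i) /\ density (rb i)) /\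
    rho = \sum_(i < k) RtoC (p i) *: (ra i *t rb i).

Definition CP1 da db (H : 'M[C]_(da * db)) : R :=
  sup [set x | exists rho, separable rho /\ x = CP rho H].

Definition is_min_eigenvalue n (H : 'M[C]_n) (E0 : R) : Prop :=
  eigenvalue H (RtoC E0) /\ forall a, eigenvalue H a -> RtoC E0 <= a.

Definition is_max_eigenvalue n (H : 'M[C]_n) (Emax : R) : Prop :=
  eigenvalue H (RtoC Emax) /\ forall a, eigenvalue H a -> a <= RtoC Emax.

Definition eigenspace_has_product_vector da db (H : 'M[C]_(da * db)) (E : R) : Prop :=
  exists (phi : 'cV[C]_da) (psi : 'cV[C]_db),
    phi != 0 /\ psi != 0 /\ H *m (phi *t psi) = RtoC E *: (phi *t psi).

End QDefs.

(* Main.v *)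
Require Import Defs.
From HB Require Import structures.
From mathcomp Require Import all_boot all_order all_algebra.
From mathcomp Require Import classical_sets reals.
From mathcomp Require Import complex mxtens.
From mathcomp Require Import boolp functions topology normedtype derive.
From mathcomp Require Import lra.
Import Order.TTheory GRing.Theory Num.Theory.
Local Open Scope ring_scope.
Local Open Scope sesquilinear_scope.
Set Implicit Arguments.
Unset Strict Implicit.
Unset Printing Implicit Defensive.
Import numFieldTopology.Exports numFieldNormedType.Exports.
Section LA.
Variable R : realType.
Local Notation C := (R[i]).

Lemma ctM m n p (A : 'M[C]_(m,n)) (B : 'M[C]_(n,p)) : (A *m B)^t* = B^t* *m A^t*.
Proof. by rewrite trmx_mul map_mxM. Qed.

Lemma ctD m n (A B : 'M[C]_(m,n)) : (A + B)^t* = A^t* + B^t*.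
Proof. by apply/matrixP=> i j; rewrite !mxE rmorphD. Qed.

Lemma ctZ m n (c : C) (A : 'M[C]_(m,n)) : (c *: A)^t* = Num.conj c *: A^t*.
Proof. by apply/matrixP=> i j; rewrite !mxE rmorphM. Qed.

Lemma ctK m n (A : 'M[C]_(m,n)) : A^t*^t* = A.
Proof. exact: trmxCK. Qed.

Lemma ct_sum m n k (F : 'I_k -> 'M[C]_(m,n)) : (\sum_i F i)^t* = \sum_i (F i)^t*.
Proof. by apply/matrixP=> i j; rewrite !mxE !summxE rmorph_sum; apply: eq_bigr=> l _; rewrite !mxE. Qed.

Lemma ct_tens m n p q (A : 'M[C]_(m,n)) (B : 'M[C]_(p,q)) : (A *t B)^t* = A^t* *t B^t*.
Proof. by apply/matrixP=> i j; rewrite !mxE rmorphM. Qed.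

Lemma ct1 n : (1%:M : 'M[C]_n)^t* = 1%:M.
Proof. by apply/matrixP=> i j; rewrite !mxE; case: eqP; case: eqP=> //= *; rewrite ?conjC1 ?conjC0 //; congruence. Qed.

Definition qf n (v : 'cV[C]_n) (M : 'M[C]_n) : C := (v^t* *m M *m v) 0 0.
Definition n2 n (v : 'cV[C]_n) : C := (v^t* *m v) 0 0.

Lemma n2E n (v : 'cV[C]_n) : n2 v = \sum_i `|v i 0| ^+ 2.
Proof. by rewrite /n2 !mxE; apply: eq_bigr=> i _; rewrite !mxE normCK mulrC. Qed.

Lemma n2_ge0 n (v : 'cV[C]_n) : 0 <= n2 v.
Proof. by rewrite n2E sumr_ge0 // => i _; rewrite exprn_ge0. Qed.

Lemma n2_eq0 n (v : 'cV[C]_n) : n2 v = 0 -> v = 0.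
Proof.
rewrite n2E => /eqP; rewrite psumr_eq0 => [/allP H|i _]; last by rewrite exprn_ge0.
apply/matrixP=> i j; rewrite [j]ord1 mxE.
by have := H i (mem_index_enum _); rewrite sqrf_eq0 normr_eq0 => /eqP.
Qed.

Lemma qf_gram n p (N : 'M[C]_(p,n)) (v : 'cV[C]_n) : qf v (N^t* *m N) = n2 (N *m v).
Proof. by rewrite /qf /n2 ctM !mulmxA. Qed.

Lemma qf_gram_ge0 n p (N : 'M[C]_(p,n)) (v : 'cV[C]_n) : 0 <= qf v (N^t* *m N).
Proof. by rewrite qf_gram n2_ge0. Qed.

Lemma qf_gram_eq0 n p (N : 'M[C]_(p,n)) (v : 'cV[C]_n) :
  qf v (N^t* *m N) = 0 -> N^t* *m N *m v = 0.
Proof. by rewrite qf_gram => /n2_eq0 H; rewrite -mulmxA H mulmx0. Qed.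

Lemma tr_outer n (v : 'cV[C]_n) (M : 'M[C]_n) : \tr (v *m v^t* *m M) = qf v M.
Proof.
rewrite -mulmxA mxtrace_mulC /qf.
by rewrite /mxtrace big_ord1.
Qed.

End LA.
Section Spec.
Variable R : realType.
Local Notation C := (R[i]).

Lemma unitary_adjK n (P : 'M[C]_n) : P \is unitarymx -> P^t* *m P = 1%:M.
Proof. by move=> uP; have := mulmxKtV (1%:M : 'M[C]_n) uP erefl; rewrite mul1mx. Qed.

Lemma unitary_Kadj m n (P : 'M[C]_(m,n)) : P \is unitarymx -> P *m P^t* = 1%:M.
Proof. by move/unitarymxP. Qed.

Lemma herm_spec n (A : 'M[C]_n) : A \is hermsymmx ->
  A = (spectralmx A)^t* *m diag_mx (spectral_diag A) *m spectralmx A.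
Proof.
move=> hA; have /orthomx_spectralP := hermitian_normalmx hA.
by rewrite invmx_unitary // spectral_unitarymx.
Qed.

Lemma spec_row n (A : 'M[C]_n) (i : 'I_n) : A \is hermsymmx ->
  row i (spectralmx A) *m A = spectral_diag A 0 i *: row i (spectralmx A).
Proof.
move=> hA; set P := spectralmx A; set d := spectral_diag A.
have uP : P \is unitarymx by exact: spectral_unitarymx.
rewrite -row_mul {1}(herm_spec hA) -/P -/d !mulmxA (unitary_Kadj uP) mul1mx.
by rewrite (@mul_diag_mx _ n n d P); apply/rowP=> j; rewrite !mxE.
Qed.

Lemma row_unit n (P : 'M[C]_n) (i : 'I_n) : P \is unitarymx ->
  (row i P *m (row i P)^t*) 0 0 = 1.
Proof.
move=> uP; have := unitary_Kadj uP; move/matrixP/(_ i i).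
rewrite !mxE eqxx mulr1n => <-; apply: eq_bigr=> j _; rewrite !mxE //.
Qed.

Lemma herm_spec_eig n (A : 'M[C]_n) (i : 'I_n) : A \is hermsymmx ->
  eigenvalue A (spectral_diag A 0 i).
Proof.
move=> hA; set P := spectralmx A; set d := spectral_diag A.
have uP : P \is unitarymx by exact: spectral_unitarymx.
apply/eigenvalueP; exists (row i P); first exact: spec_row.
apply/eqP=> r0; have := row_unit i uP; rewrite r0 mul0mx mxE => /eqP.
by rewrite eq_sym oner_eq0.
Qed.

Lemma diag_gram n (P : 'M[C]_n) (e : 'rV[C]_n) : (forall i, 0 <= e 0 i) ->
  exists N : 'M[C]_n, P^t* *m diag_mx e *m P = N^t* *m N.
Proof.
move=> e0; exists (diag_mx (map_mx sqrtC e) *m P).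
rewrite ctM !mulmxA; congr (_ *m _); rewrite -mulmxA; congr (_ *m _).
apply/matrixP=> i j; rewrite !mxE (bigD1 i) //= big1 ?addr0; last first.
  by move=> k /negbTE ki; rewrite !mxE ki mulr0n conjC0 mul0r.
rewrite !mxE eqxx /= mulr1n; case: eqP => [->|_]; last by rewrite !mulr0n mulr0.
by rewrite !mulr1n conj_Creal ?sqrtC_real // -expr2 sqrtCK.
Qed.

Lemma herm_lower n (A : 'M[C]_n) (c : C) : A \is hermsymmx ->
  (forall i, c <= spectral_diag A 0 i) ->
  exists N : 'M[C]_n, A - c%:M = N^t* *m N.
Proof.
move=> hA hc; set P := spectralmx A; set d := spectral_diag A.
have uP : P \is unitarymx by exact: spectral_unitarymx.
have [j|N HN] := @diag_gram n P (d - const_mx c); first by rewrite !mxE subr_ge0 hc.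
exists N; rewrite -HN linearB /= mulmxBr mulmxBl -(herm_spec hA).
have -> : diag_mx (const_mx c) = c%:M :> 'M[C]_n by apply/matrixP=> a b; rewrite !mxE.
by rewrite mul_mx_scalar -scalemxAl (unitary_adjK uP) scalemx1.
Qed.

Lemma herm_upper n (A : 'M[C]_n) (c : C) : A \is hermsymmx ->
  (forall i, spectral_diag A 0 i <= c) ->
  exists N : 'M[C]_n, c%:M - A = N^t* *m N.
Proof.
move=> hA hc; set P := spectralmx A; set d := spectral_diag A.
have uP : P \is unitarymx by exact: spectral_unitarymx.
have [j|N HN] := @diag_gram n P (const_mx c - d); first by rewrite !mxE subr_ge0 hc.
exists N; rewrite -HN linearB /= mulmxBr mulmxBl -(herm_spec hA).
have -> : diag_mx (const_mx c) = c%:M :> 'M[C]_n by apply/matrixP=> a b; rewrite !mxE.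
by rewrite mul_mx_scalar -scalemxAl (unitary_adjK uP) scalemx1.
Qed.

Lemma psd_gram n (A : 'M[C]_n) : psd A -> exists N : 'M[C]_n, A = N^t* *m N.
Proof.
move=> [hA pA]; have [|N HN] := @herm_lower n A 0 hA; last by exists N; rewrite -HN; apply/matrixP=> a b; rewrite !mxE mul0rn subr0.
move=> i; set P := spectralmx A; have uP : P \is unitarymx by exact: spectral_unitarymx.
have := pA ((row i P)^t*); rewrite ctK (spec_row i hA) -/P -scalemxAl mxE.
by rewrite (row_unit i uP) mulr1.
Qed.

End Spec.
Section Tens.
Variable R : realType.
Local Notation C := (R[i]).

Lemma tr_sum n k (F : 'I_k -> 'M[C]_n) : \tr (\sum_i F i) = \sum_i \tr (F i).
Proof.
rewrite /mxtrace; under eq_bigr do rewrite summxE; exact: exchange_big.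
Qed.

Lemma tens_suml m n p q k (F : 'I_k -> 'M[C]_(m,n)) (B : 'M[C]_(p,q)) :
  (\sum_i F i) *t B = \sum_i (F i *t B).
Proof.
apply/matrixP=> a b; rewrite !mxE !summxE mulr_suml.
by apply: eq_bigr=> i _; rewrite !mxE.
Qed.

Lemma tens_sumr m n p q k (A : 'M[C]_(m,n)) (F : 'I_k -> 'M[C]_(p,q)) :
  A *t (\sum_i F i) = \sum_i (A *t F i).
Proof.
apply/matrixP=> a b; rewrite !mxE !summxE mulr_sumr.
by apply: eq_bigr=> i _; rewrite !mxE.
Qed.

Lemma tens_scalel m n p q (c : C) (A : 'M[C]_(m,n)) (B : 'M[C]_(p,q)) :
  (c *: A) *t B = c *: (A *t B).
Proof. by apply/matrixP=> a b; rewrite !mxE mulrA. Qed.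

Lemma gram_outer m n (X : 'M[C]_(m,n)) :
  X^t* *m X = \sum_j (row j X)^t* *m ((row j X)^t*)^t*.
Proof.
apply/matrixP=> a b; rewrite !mxE summxE; apply: eq_bigr=> j _.
by rewrite !mxE big_ord1 !mxE conjCK.
Qed.

Lemma tens_outer m n (x : 'cV[C]_m) (y : 'cV[C]_n) :
  (x *m x^t*) *t (y *m y^t*) = (x *t y) *m (x *t y)^t*.
Proof. by rewrite ct_tens tensmx_mul. Qed.

Lemma tens_conj m n (Ua ra : 'M[C]_m) (Ub rb : 'M[C]_n) :
  (Ua *t Ub) *m (ra *t rb) *m (Ua *t Ub)^t* =
  (Ua *m ra *m Ua^t*) *t (Ub *m rb *m Ub^t*).
Proof. by rewrite ct_tens !tensmx_mul. Qed.

Lemma tr_gram_unit m (Ua : 'M[C]_m) (S : 'M[C]_m) : Ua \is unitarymx ->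
  \sum_j n2 ((row j (S *m Ua^t*))^t*) = \tr (S^t* *m S).
Proof.
move=> uU; rewrite /n2; under eq_bigr do rewrite ctK.
have -> : \tr (S^t* *m S) = \tr ((S *m Ua^t*) *m (S *m Ua^t*)^t*).
  by rewrite ctM ctK mulmxA -(mulmxA S) (unitary_adjK uU) mulmx1 mxtrace_mulC.
rewrite /mxtrace; apply: eq_bigr=> j _; rewrite !mxE; apply: eq_bigr=> l _; rewrite !mxE //.
Qed.

Lemma sep_decomp da db (rho : 'M[C]_(da * db)) (Ua : 'M[C]_da) (Ub : 'M[C]_db) :
  separable rho -> unitary Ua -> unitary Ub ->
  exists k (p : 'I_k -> R) (x : 'I_k -> 'I_da -> 'cV[C]_da) (y : 'I_k -> 'I_db -> 'cV[C]_db),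
  [/\ (forall i, 0 <= p i), \sum_i p i = 1,
     (forall i, \sum_j n2 (x i j) = 1), (forall i, \sum_l n2 (y i l) = 1) &
     (Ua *t Ub) *m rho *m (Ua *t Ub)^t* =
       \sum_i \sum_j \sum_l RtoC (p i) *: ((x i j *t y i l) *m (x i j *t y i l)^t*)].
Proof.
move=> [k [p [ra [rb [p0 [p1 [dens ->]]]]]]] uA uB.
have [Sa HSa] := fin_all_exists (fun i => psd_gram (dens i).1.1).
have [Sb HSb] := fin_all_exists (fun i => psd_gram (dens i).2.1).
exists k, p, (fun i j => (row j (Sa i *m Ua^t*))^t*), (fun i l => (row l (Sb i *m Ub^t*))^t*).
split => //.
- move=> i; rewrite tr_gram_unit // -HSa; exact: (dens i).1.2.
- move=> i; rewrite tr_gram_unit // -HSb; exact: (dens i).2.2.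
rewrite mulmx_sumr mulmx_suml; apply: eq_bigr=> i _.
rewrite -scalemxAr -scalemxAl tens_conj.
under eq_bigr do rewrite -scaler_sumr.
rewrite -scaler_sumr; congr (_ *: _).
have -> : Ua *m ra i *m Ua^t* = (Sa i *m Ua^t*)^t* *m (Sa i *m Ua^t*).
  by rewrite ctM ctK HSa !mulmxA.
have -> : Ub *m rb i *m Ub^t* = (Sb i *m Ub^t*)^t* *m (Sb i *m Ub^t*).
  by rewrite ctM ctK HSb !mulmxA.
rewrite !gram_outer tens_suml; apply: eq_bigr=> j _.
rewrite tens_sumr; apply: eq_bigr=> l _.
by rewrite tens_outer.
Qed.

End Tens.
Section Energy.
Variable R : realType.
Local Notation C := (R[i]).

Lemma RtoCE (x : R) : RtoC x = (x%:C)%C. Proof. by []. Qed.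

Lemma tr_decomp k da db (c : 'I_k -> C) (x : 'I_k -> 'I_da -> 'cV[C]_da)
   (y : 'I_k -> 'I_db -> 'cV[C]_db) (M : 'M[C]_(da * db)) :
  \tr ((\sum_i \sum_j \sum_l c i *: ((x i j *t y i l) *m (x i j *t y i l)^t*)) *m M) =
  \sum_i c i * \sum_j \sum_l qf (x i j *t y i l) M.
Proof.
rewrite mulmx_suml tr_sum; apply: eq_bigr=> i _.
rewrite mulmx_suml tr_sum mulr_sumr; apply: eq_bigr=> j _.
rewrite mulmx_suml tr_sum mulr_sumr; apply: eq_bigr=> l _.
by rewrite -scalemxAl mxtraceZ tr_outer.
Qed.

Lemma n2_tens m n (x : 'cV[C]_m) (y : 'cV[C]_n) : n2 (x *t y) = n2 x * n2 y.
Proof.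
rewrite /n2 (ct_tens x y) (tensmx_mul (x^t*) (y^t*) x y) mxE.
by rewrite (ord1 (mxtens_unindex _).1) (ord1 (mxtens_unindex _).2).
Qed.

Lemma qf1 n (v : 'cV[C]_n) : qf v 1%:M = n2 v.
Proof. by rewrite /qf mulmx1. Qed.

End Energy.
Section Energy2.
Variable R : realType.
Local Notation C := (R[i]).

Lemma ge0_ReE (z : C) : 0 <= z -> z = ((complex.Re z)%:C)%C.
Proof. by move=> /ger0_real /RRe_real. Qed.

Lemma ge0_Re (z : C) : 0 <= z -> 0 <= complex.Re z.
Proof. by rewrite lecE => /andP[]. Qed.

Lemma sum_lt_ex {F : realDomainType} {k} {a b : 'I_k -> F} :
  \sum_i a i < \sum_i b i -> exists i, a i < b i.
Proof.
case: (pickP (fun i => a i < b i)) => [i Hi|H]; first by move=> _; exists i.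
move=> Hlt; exfalso; move: Hlt; apply/negP; rewrite -leNgt.
by apply: ler_sum => i _; have := H i; rewrite /= ltNge => /negbFE.
Qed.

Lemma n2Z n (a : C) (x : 'cV[C]_n) : n2 (a *: x) = Num.conj a * a * n2 x.
Proof. by rewrite /n2 ctZ -scalemxAl -scalemxAr !mxE mulrA. Qed.

Lemma qfZ n (a : C) (x : 'cV[C]_n) M : qf (a *: x) M = Num.conj a * a * qf x M.
Proof. by rewrite /qf ctZ -!scalemxAl -scalemxAr !mxE mulrA. Qed.

Lemma tens_scaler m n p q (c : C) (A : 'M[C]_(m,n)) (B : 'M[C]_(p,q)) :
  A *t (c *: B) = c *: (A *t B).
Proof. by apply/matrixP=> a b; rewrite !mxE mulrCA. Qed.

Lemma inv_sqrt_conj (X : R) : 0 < X ->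
  Num.conj ((sqrtC (X%:C)%C)^-1) * (sqrtC (X%:C)%C)^-1 = ((X^-1)%:C)%C.
Proof.
move=> X0; have sX : 0 < sqrtC (X%:C)%C by rewrite sqrtC_gt0 ltcR.
rewrite conj_Creal; last by apply: gtr0_real; rewrite invr_gt0.
by rewrite -expr2 exprVn sqrtCK rmorphV // unitfE; rewrite gt_eqF.
Qed.

Lemma normalize n (x : 'cV[C]_n) (X : R) : n2 x = (X%:C)%C -> 0 < X ->
  n2 ((sqrtC (X%:C)%C)^-1 *: x) = 1.
Proof.
move=> hx X0; rewrite n2Z inv_sqrt_conj // hx -rmorphM mulVf //.
by rewrite gt_eqF.
Qed.

End Energy2.
Section Energy3.
Variable R : realType.
Local Notation C := (R[i]).

Lemma Re_sum k (F : 'I_k -> C) : complex.Re (\sum_i F i) = \sum_i complex.Re (F i).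
Proof. exact: raddf_sum. Qed.

Lemma RtoC_sum k (F : 'I_k -> R) : \sum_i ((F i)%:C)%C = ((\sum_i F i)%:C)%C :> C.
Proof. by rewrite rmorph_sum. Qed.

Lemma sep_energy da db (rho : 'M[C]_(da * db)) (Ua : 'M[C]_da) (Ub : 'M[C]_db)
  (N : 'M[C]_(da * db)) :
  separable rho -> unitary Ua -> unitary Ub ->
  [/\ \tr ((Ua *t Ub) *m rho *m (Ua *t Ub)^t*) = 1,
      0 <= \tr ((Ua *t Ub) *m rho *m (Ua *t Ub)^t* *m (N^t* *m N)) &
      forall eps : R,
        complex.Re (\tr ((Ua *t Ub) *m rho *m (Ua *t Ub)^t* *m (N^t* *m N))) < eps ->
        exists (u : 'cV[C]_da) (w : 'cV[C]_db),
          [/\ n2 u = 1, n2 w = 1 & complex.Re (qf (u *t w) (N^t* *m N)) < eps]].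
Proof.
move=> sep uA uB.
have [k [p [x [y [p0 p1 x1 y1 ->]]]]] := sep_decomp sep uA uB.
set K := N^t* *m N.
split.
- rewrite -[X in \tr X]mulmx1 tr_decomp.
  under eq_bigr do under eq_bigr do under eq_bigr do rewrite qf1 n2_tens.
  under eq_bigr do under eq_bigr do rewrite -mulr_sumr.
  under eq_bigr do rewrite -mulr_suml y1 mulr1 x1 mulr1.
  by rewrite RtoC_sum p1.
- rewrite tr_decomp sumr_ge0 // => i _; rewrite mulr_ge0 //; first by rewrite RtoCE ler0c.
  by apply: sumr_ge0 => j _; apply: sumr_ge0 => l _; exact: qf_gram_ge0.
move=> eps.
pose Q i j l := complex.Re (qf (x i j *t y i l) K).
pose X i j := complex.Re (n2 (x i j)).
pose Y i l := complex.Re (n2 (y i l)).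
have hQ i j l : qf (x i j *t y i l) K = ((Q i j l)%:C)%C by exact/ge0_ReE/qf_gram_ge0.
have hX i j : n2 (x i j) = ((X i j)%:C)%C by exact/ge0_ReE/n2_ge0.
have hY i l : n2 (y i l) = ((Y i l)%:C)%C by exact/ge0_ReE/n2_ge0.
have Q0 i j l : 0 <= Q i j l by exact/ge0_Re/qf_gram_ge0.
have X0 i j : 0 <= X i j by exact/ge0_Re/n2_ge0.
have Y0 i l : 0 <= Y i l by exact/ge0_Re/n2_ge0.
have X1 i : \sum_j X i j = 1 by rewrite /X -Re_sum x1.
have Y1 i : \sum_l Y i l = 1 by rewrite /Y -Re_sum y1.
have -> : complex.Re (\tr ((\sum_i \sum_j \sum_l RtoC (p i) *:
     ((x i j *t y i l) *m (x i j *t y i l)^t*)) *m K)) =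
   \sum_i \sum_j \sum_l p i * Q i j l.
  rewrite tr_decomp.
  under eq_bigr do under eq_bigr do under eq_bigr do rewrite hQ.
  under eq_bigr do under eq_bigr do rewrite RtoC_sum.
  under eq_bigr do rewrite RtoC_sum RtoCE -rmorphM.
  rewrite RtoC_sum /=; apply: eq_bigr=> i _; rewrite mulr_sumr; apply: eq_bigr=> j _.
  by rewrite mulr_sumr.
have Heps : eps = \sum_i \sum_j \sum_l eps * p i * X i j * Y i l.
  rewrite -[LHS]mulr1 -p1 mulr_sumr; apply: eq_bigr=> i _.
  rewrite -[LHS]mulr1 -(X1 i) mulr_sumr; apply: eq_bigr=> j _.
  rewrite -[LHS]mulr1 -(Y1 i) mulr_sumr; apply: eq_bigr=> l _.
  by [].
move=> Hlt0; have := Hlt0; rewrite {1}Heps.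
case/sum_lt_ex => i; case/sum_lt_ex => j; case/sum_lt_ex => l Hlt.
have pp : 0 < p i.
  rewrite lt0r p0 andbT; apply/eqP=> e; move: Hlt; rewrite e mul0r mulr0 !mul0r.
  by rewrite ltxx.
have {}Hlt : Q i j l < eps * X i j * Y i l.
  by move: Hlt; rewrite (mulrC eps) -!mulrA ltr_pM2l // !mulrA.
have Xp : 0 < X i j.
  rewrite lt0r X0 andbT; apply/eqP=> e; move: Hlt; rewrite e mulr0 mul0r.
  by rewrite ltNge Q0.
have Yp : 0 < Y i l.
  rewrite lt0r Y0 andbT; apply/eqP=> e; move: Hlt; rewrite e mulr0.
  by rewrite ltNge Q0.
exists ((sqrtC ((X i j)%:C)%C)^-1 *: x i j), ((sqrtC ((Y i l)%:C)%C)^-1 *: y i l).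
split; [exact: normalize|exact: normalize|].
rewrite tens_scalel tens_scaler scalerA qfZ.
set a := (sqrtC _)^-1; set b := (sqrtC _)^-1.
have -> : Num.conj (a * b) * (a * b) = ((((X i j)^-1 * (Y i l)^-1))%:C)%C.
  by rewrite rmorphM mulrACA !inv_sqrt_conj // -rmorphM.
rewrite hQ -rmorphM /= mulrC -invfM ltr_pdivrMr ?mulr_gt0 //.
by rewrite mulrA.
Qed.

End Energy3.
Section Cont.
Variable R : realType.
Local Notation C := (R[i]).
Variable n : nat.
Local Notation T := 'rV[R]_n.

Definition ccont (f : T -> C) :=
  continuous (fun v => complex.Re (f v)) /\ continuous (fun v => complex.Im (f v)).

Lemma ccont_cst (c : C) : ccont (fun _ => c).
Proof. by split => x; apply: cst_continuous. Qed.

Lemma ccont_mk (g h : T -> R) : continuous g -> continuous h ->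
  ccont (fun v => Complex (g v) (h v)).
Proof. by move=> cg ch; split. Qed.

Lemma ccontD (f g : T -> C) : ccont f -> ccont g -> ccont (fun v => f v + g v).
Proof.
move=> [f1 f2] [g1 g2]; split=> x.
  have -> : (fun v => complex.Re (f v + g v)) = (fun v => complex.Re (f v)) + (fun v => complex.Re (g v)).
    by apply: funext => v; rewrite raddfD.
  by apply: continuousD; [exact: f1|exact: g1].
have -> : (fun v => complex.Im (f v + g v)) = (fun v => complex.Im (f v)) + (fun v => complex.Im (g v)).
  by apply: funext => v; rewrite raddfD.
by apply: continuousD; [exact: f2|exact: g2].
Qed.

Lemma ccontM (f g : T -> C) : ccont f -> ccont g -> ccont (fun v => f v * g v).
Proof.
move=> [f1 f2] [g1 g2]; split=> x.
  have E v : complex.Re (f v * g v) = complex.Re (f v) * complex.Re (g v) - complex.Im (f v) * complex.Im (g v).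
    by case: (f v) => a b; case: (g v).
  have -> : (fun v => complex.Re (f v * g v)) =
    (fun v => complex.Re (f v)) \* (fun v => complex.Re (g v)) -
    (fun v => complex.Im (f v)) \* (fun v => complex.Im (g v)).
    by apply: funext => v; rewrite E.
  by apply: continuousB; apply: continuousM; [exact: f1|exact: g1|exact: f2|exact: g2].
have E v : complex.Im (f v * g v) = complex.Re (f v) * complex.Im (g v) + complex.Im (f v) * complex.Re (g v).
  by case: (f v) => a b; case: (g v).
have -> : (fun v => complex.Im (f v * g v)) =
    (fun v => complex.Re (f v)) \* (fun v => complex.Im (g v)) +
    (fun v => complex.Im (f v)) \* (fun v => complex.Re (g v)).
  by apply: funext => v; rewrite E.
by apply: continuousD; apply: continuousM; [exact: f1|exact: g2|exact: f2|exact: g1].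
Qed.

Lemma ccontJ (f : T -> C) : ccont f -> ccont (fun v => Num.conj (f v)).
Proof.
move=> [f1 f2]; split=> x.
  have -> : (fun v => complex.Re (Num.conj (f v))) = (fun v => complex.Re (f v)).
    by apply: funext => v; case: (f v).
  exact: f1.
have -> : (fun v => complex.Im (Num.conj (f v))) = (fun v => - complex.Im (f v)).
  by apply: funext => v; case: (f v).
by apply: continuousN; exact: f2.
Qed.

Lemma ccont_sum k (F : 'I_k -> T -> C) : (forall i, ccont (F i)) ->
  ccont (fun v => \sum_i F i v).
Proof.
elim: k F => [|k IH] F hF.
  have -> : (fun v => \sum_(i < 0) F i v) = (fun _ => 0).
    by apply: funext => v; rewrite big_ord0.
  exact: ccont_cst.
have -> : (fun v => \sum_(i < k.+1) F i v) =
   (fun v => \sum_(i < k) F (widen_ord (leqnSn k) i) v + F ord_max v).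
  by apply: funext => v; rewrite big_ord_recr.
by apply: ccontD; [apply: IH => i|]; exact: hF.
Qed.

End Cont.
Section Compact.
Variable R : realType.
Local Notation C := (R[i]).
Variables da db : nat.
Local Notation n := ((da + da) + (db + db))%N.
Local Notation T := 'rV[R]_n.

Definition uv (v : T) : 'cV[C]_da :=
  \col_j (Complex (v 0 (lshift (db+db) (lshift da j))) (v 0 (lshift (db+db) (rshift da j)))).
Definition wv (v : T) : 'cV[C]_db :=
  \col_l (Complex (v 0 (rshift (da+da) (lshift db l))) (v 0 (rshift (da+da) (rshift db l)))).
Definition vof (u : 'cV[C]_da) (w : 'cV[C]_db) : T :=
  row_mx (row_mx (\row_j complex.Re (u j 0)) (\row_j complex.Im (u j 0)))
         (row_mx (\row_l complex.Re (w l 0)) (\row_l complex.Im (w l 0))).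

Lemma uv_vof u w : uv (vof u w) = u.
Proof.
apply/matrixP=> j z; rewrite [z]ord1 /uv /vof mxE !row_mxEl row_mxEr !mxE.
by case: (u j 0).
Qed.

Lemma wv_vof u w : wv (vof u w) = w.
Proof.
apply/matrixP=> j z; rewrite [z]ord1 /wv /vof mxE !row_mxEr row_mxEl !mxE.
by case: (w j 0).
Qed.

Lemma ccont_qf m (X : T -> 'cV[C]_m) (M : 'M[C]_m) :
  (forall a, ccont (fun v => X v a 0)) -> ccont (fun v => qf (X v) M).
Proof.
move=> hX.
have -> : (fun v => qf (X v) M) =
    (fun v => \sum_a (\sum_b Num.conj (X v b 0) * M b a) * X v a 0).
  apply: funext => v; rewrite /qf !mxE; apply: eq_bigr => a _; rewrite !mxE.
  by congr (_ * _); apply: eq_bigr => b _; rewrite !mxE.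
apply: ccont_sum => a; apply: ccontM => //; apply: ccont_sum => b.
by apply: ccontM; [exact/ccontJ/hX|exact: ccont_cst].
Qed.

Lemma ccont_uv j z : ccont (fun v => uv v j z).
Proof.
have -> : (fun v => uv v j z) =
  (fun v => Complex (v 0 (lshift (db+db) (lshift da j))) (v 0 (lshift (db+db) (rshift da j)))).
  by apply: funext => v; rewrite mxE.
by apply: ccont_mk; apply: coord_continuous.
Qed.

Lemma ccont_wv j z : ccont (fun v => wv v j z).
Proof.
have -> : (fun v => wv v j z) =
  (fun v => Complex (v 0 (rshift (da+da) (lshift db j))) (v 0 (rshift (da+da) (rshift db j)))).
  by apply: funext => v; rewrite mxE.
by apply: ccont_mk; apply: coord_continuous.
Qed.

Definition Gc (K : 'M[C]_(da * db)) (v : T) : C :=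
  qf (uv v *t wv v) K + (n2 (uv v) - 1) * (n2 (uv v) - 1) + (n2 (wv v) - 1) * (n2 (wv v) - 1).

Lemma ccont_Gc K : ccont (Gc K).
Proof.
have ccont_n2u : ccont (fun v => n2 (uv v) - 1).
  have -> : (fun v => n2 (uv v) - 1) = (fun v => qf (uv v) 1%:M + (-1)).
    by apply: funext => v; rewrite qf1.
  by apply: ccontD; [apply: ccont_qf => a; exact: ccont_uv|exact: ccont_cst].
have ccont_n2w : ccont (fun v => n2 (wv v) - 1).
  have -> : (fun v => n2 (wv v) - 1) = (fun v => qf (wv v) 1%:M + (-1)).
    by apply: funext => v; rewrite qf1.
  by apply: ccontD; [apply: ccont_qf => a; exact: ccont_wv|exact: ccont_cst].
apply: ccontD; [apply: ccontD|]; last 2 first.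
- exact: ccontM.
- exact: ccontM.
apply: ccont_qf => a; have -> : (fun v => (uv v *t wv v) a 0) =
  (fun v => uv v (mxtens_unindex a).1 (mxtens_unindex (0 : 'I_(1*1))).1 *
            wv v (mxtens_unindex a).2 (mxtens_unindex (0 : 'I_(1*1))).2).
  by apply: funext => v; rewrite mxE.
by apply: ccontM; [exact: ccont_uv|exact: ccont_wv].
Qed.

End Compact.
Section Compact2.
Variable R : realType.
Local Notation C := (R[i]).
Variables da db : nat.
Local Notation n := ((da + da) + (db + db))%N.
Local Notation T := 'rV[R]_n.

Lemma coord_le1 m (u : 'cV[C]_m) j : n2 u = 1 ->
  (complex.Re (u j 0))^+2 + (complex.Im (u j 0))^+2 <= 1.
Proof.
move=> h; rewrite -(@lecR R) add_Re2_Im2.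
have -> : ((1 : R)%:C)%C = 1 by [].
rewrite -h n2E (bigD1 j) //= lerDl sumr_ge0 // => i _.
by rewrite exprn_ge0.
Qed.

Lemma sq_le1 (x : R) : x^+2 <= 1 -> -1 <= x <= 1.
Proof.
move=> h; rewrite -ler_norml -(@expr_le1 _ 2) // real_normK //; exact: num_real.
Qed.

Lemma G_eq K (v : T) : complex.Re (Gc K v) =
  complex.Re (qf (uv v *t wv v) K) + (complex.Re (n2 (uv v)) - 1)^+2 +
  (complex.Re (n2 (wv v)) - 1)^+2.
Proof.
rewrite /Gc (ge0_ReE (n2_ge0 (uv v))) (ge0_ReE (n2_ge0 (wv v))).
have -> : ((1 : C)) = ((1 : R)%:C)%C by [].
rewrite -!rmorphB -!rmorphM !raddfD /= !expr2.
by [].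
Qed.

Lemma compact_min (N : 'M[C]_(da * db)) :
  (forall eps : R, 0 < eps -> exists (u : 'cV[C]_da) (w : 'cV[C]_db),
      [/\ n2 u = 1, n2 w = 1 & complex.Re (qf (u *t w) (N^t* *m N)) < eps]) ->
  exists (u : 'cV[C]_da) (w : 'cV[C]_db),
      [/\ n2 u = 1, n2 w = 1 & qf (u *t w) (N^t* *m N) = 0].
Proof.
move=> H; set K := N^t* *m N.
pose G v := complex.Re (Gc K v).
have cG : continuous G := (ccont_Gc K).1.
pose A := [set v : T | forall i, (`[(-1 : R), 1]%classic) (v ord0 i)]%classic.
have cA : compact A.
  by apply: (@rV_compact _ n (fun _ => `[(-1 : R), 1]%classic)) => i; exact: segment_compact.
have A0 : (A !=set0)%classic.
  by exists 0 => i /=; rewrite mxE in_itv /= lerN10 ler01.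
have [c cA' minc] := compact_EVT_min A0 cA (continuous_subspaceT cG).
have Re1 : complex.Re (1 : C) = 1 by [].
have Gv u w : n2 u = 1 -> n2 w = 1 -> G (vof u w) = complex.Re (qf (u *t w) K).
  move=> hu hw; rewrite /G G_eq uv_vof wv_vof hu hw Re1 subrr expr0n /= !addr0 //.
have b1 (x y : R) : x^+2 + y^+2 <= 1 -> -1 <= x <= 1.
  move=> h; apply: sq_le1; apply: le_trans h; rewrite lerDl; exact: sqr_ge0.
have b2 (x y : R) : x^+2 + y^+2 <= 1 -> -1 <= y <= 1.
  move=> h; apply: sq_le1; apply: le_trans h; rewrite lerDr; exact: sqr_ge0.
have vA u w : n2 u = 1 -> n2 w = 1 -> A (vof u w).
  move=> hu hw i; rewrite /= in_itv /= /vof.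
  case: (split_ordP i) => [i1 ->|i2 ->].
    rewrite row_mxEl; case: (split_ordP i1) => [j ->|j ->].
      by rewrite row_mxEl mxE; apply: b1 (coord_le1 j hu).
    by rewrite row_mxEr mxE; apply: b2 (coord_le1 j hu).
  rewrite row_mxEr; case: (split_ordP i2) => [j ->|j ->].
    by rewrite row_mxEl mxE; apply: b1 (coord_le1 j hw).
  by rewrite row_mxEr mxE; apply: b2 (coord_le1 j hw).
have Gle : G c <= 0.
  rewrite leNgt; apply/negP => Gp; have [u [w [hu hw hq]]] := H _ Gp.
  have := minc (vof u w) (mem_set (vA u w hu hw)); rewrite Gv // => h.
  by move: (le_lt_trans h hq); rewrite ltxx.
move: Gle; rewrite /G G_eq => Gle.
have q0 := ge0_Re (qf_gram_ge0 N (uv c *t wv c)).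
have s1 := sqr_ge0 (complex.Re (n2 (uv c)) - 1).
have s2 := sqr_ge0 (complex.Re (n2 (wv c)) - 1).
have e1 : (complex.Re (n2 (uv c)) - 1)^+2 = 0 by apply/le_anti; rewrite s1 andbT; lra.
have e2 : (complex.Re (n2 (wv c)) - 1)^+2 = 0 by apply/le_anti; rewrite s2 andbT; lra.
have e3 : complex.Re (qf (uv c *t wv c) K) = 0 by apply/le_anti; rewrite q0 andbT; lra.
exists (uv c), (wv c); split.
- move/eqP: e1; rewrite sqrf_eq0 subr_eq0 => /eqP e1.
  by rewrite (ge0_ReE (n2_ge0 _)) e1.
- move/eqP: e2; rewrite sqrf_eq0 subr_eq0 => /eqP e2.
  by rewrite (ge0_ReE (n2_ge0 _)) e2.
by rewrite (ge0_ReE (qf_gram_ge0 N (uv c *t wv c))) e3.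
Qed.

End Compact2.
Section UnitMap.
Variable R : realType.
Local Notation C := (R[i]).

Lemma n2_row m (r : 'rV[C]_m) : n2 (r^t*) = (r *m r^t*) 0 0.
Proof. by rewrite /n2 ctK. Qed.

Lemma first_row_unitary m (x : 'cV[C]_m.+1) : n2 x = 1 ->
  exists Q : 'M[C]_m.+1, Q \is unitarymx /\ row 0 Q = x^t*.
Proof.
move=> hx; pose A : 'M[C]_m.+1 := \matrix_(i, j) (if i == 0 then (x^t*) 0 j else 0).
have rA : row 0 A = x^t* by apply/rowP=> j; rewrite !mxE eqxx.
pose S := schmidt A.
have uS : S \is unitarymx by apply: schmidt_unitarymx.
exists S; split => //.
have := row_schmidt_sub A 0.
rewrite (big_pred1 (0 : 'I_m.+1)); last first.
  by move=> k /=; rewrite leqn0; apply/idP/eqP => [/eqP h|->//]; apply: val_inj.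
rewrite genmxE => /sub_rVP[c hc].
have := form1_row_schmidt A 0; rewrite dotmxE -/S hc -scalemxAl mxE (row_unit 0 uS) mulr1 => c0.
have : n2 x = c * Num.conj c.
  by rewrite -[x]ctK n2_row -rA hc ctZ -scalemxAr -scalemxAl scalerA mxE -/S (row_unit 0 uS) mulr1 mulrC.
rewrite hx conj_Creal ?ger0_real // -expr2 => /eqP.
rewrite eq_sym -subr_eq0 subr_sqr_1 mulf_eq0 => /orP[/eqP h|].
  by rewrite -rA hc; move/eqP: h; rewrite subr_eq0 => /eqP ->; rewrite scale1r.
by rewrite addr_eq0 => /eqP h; move: c0; rewrite h oppr_ge0 ler10.
Qed.

Lemma Q_first m (Q : 'M[C]_m.+1) (x : 'cV[C]_m.+1) : Q \is unitarymx -> row 0 Q = x^t* ->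
  Q *m x = col 0 1%:M.
Proof.
move=> uQ rQ; have -> : x = col 0 (Q^t*).
  by rewrite -[x]ctK -rQ; apply/matrixP=> i j; rewrite !mxE.
by rewrite [col 0 (Q^t*)]colE mulmxA (unitary_Kadj uQ) -colE.
Qed.

Lemma unit_map m (x y : 'cV[C]_m) : n2 x = 1 -> n2 y = 1 ->
  exists U : 'M[C]_m, unitary U /\ U *m x = y.
Proof.
case: m x y => [|m] x y hx hy.
  by move: hx; rewrite n2E big_ord0 => /eqP; rewrite eq_sym oner_eq0.
have [Qx [uQx rx]] := first_row_unitary hx.
have [Qy [uQy ry]] := first_row_unitary hy.
exists (Qy^t* *m Qx); split.
  by rewrite /unitary mul_unitarymx // trmxC_unitary.
by rewrite -mulmxA (Q_first uQx rx) -(Q_first uQy ry) mulmxA (unitary_adjK uQy) mul1mx.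
Qed.

End UnitMap.
Section Prod.
Variable R : realType.
Local Notation C := (R[i]).

Lemma unitary1 m : unitary (1%:M : 'M[C]_m).
Proof. by apply/unitarymxP; rewrite ct1 mul1mx. Qed.

Lemma n2_unitary m (U : 'M[C]_m) (x : 'cV[C]_m) : unitary U -> n2 (U *m x) = n2 x.
Proof. by move=> uU; rewrite /n2 ctM mulmxA -(mulmxA _ _ U) (unitary_adjK uU) mulmx1. Qed.

Lemma outer_density m (x : 'cV[C]_m) : n2 x = 1 -> density (x *m x^t*).
Proof.
move=> hx; split; last by rewrite mxtrace_mulC /mxtrace big_ord1.
split.
  by apply/is_hermitianmxP; rewrite expr0 scale1r ctM ctK.
by move=> v; have := qf_gram_ge0 (x^t*) v; rewrite ctK.
Qed.

Lemma prod_sep da db (x : 'cV[C]_da) (y : 'cV[C]_db) : n2 x = 1 -> n2 y = 1 ->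
  separable ((x *m x^t*) *t (y *m y^t*)).
Proof.
move=> hx hy; exists 1%N, (fun _ => 1), (fun _ => x *m x^t*), (fun _ => y *m y^t*).
split; first by move=> _; exact: ler01.
split; first by rewrite big_ord1.
split; first by move=> _; split; apply: outer_density.
have -> : RtoC (1 : R) = 1 by [].
by rewrite big_ord1 scale1r.
Qed.

Lemma prod_energy da db (Ua : 'M[C]_da) (Ub : 'M[C]_db) (x : 'cV[C]_da) (y : 'cV[C]_db)
   (H : 'M[C]_(da * db)) :
  \tr ((Ua *t Ub) *m ((x *m x^t*) *t (y *m y^t*)) *m (Ua *t Ub)^t* *m H) =
  qf ((Ua *m x) *t (Ub *m y)) H.
Proof.
rewrite tens_conj -!mulmxA -!ctM !mulmxA tens_outer tr_outer //.
Qed.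

Lemma eig_qf n (H : 'M[C]_n) (v : 'cV[C]_n) (E : C) :
  H *m v = E *: v -> n2 v = 1 -> qf v H = E.
Proof. by move=> hv h1; rewrite /qf -mulmxA hv -scalemxAr mxE -/(n2 v) h1 mulr1. Qed.

End Prod.
Section Main.
Variable R : realType.
Local Notation C := (R[i]).
Variables (da db : nat) (H : 'M[C]_(da * db)) (E0 Emax : R).
Hypothesis hH : is_hermitian H.
Hypothesis hmin : is_min_eigenvalue H E0.
Hypothesis hmax : is_max_eigenvalue H Emax.

Local Notation D rho Ua Ub := ((Ua *t Ub) *m rho *m (Ua *t Ub)^t*).

Lemma lo_spec i : RtoC E0 <= spectral_diag H 0 i.
Proof. exact: hmin.2 (herm_spec_eig i hH). Qed.
Lemma hi_spec i : spectral_diag H 0 i <= RtoC Emax.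
Proof. exact: hmax.2 (herm_spec_eig i hH). Qed.

Variables N0 N1 : 'M[C]_(da * db).
Hypothesis hN0' : H - (RtoC E0)%:M = N0^t* *m N0.
Hypothesis hN1' : (RtoC Emax)%:M - H = N1^t* *m N1.
Lemma hN0 : H = N0^t* *m N0 + (RtoC E0)%:M.
Proof. by rewrite -hN0' subrK. Qed.
Lemma hN1 : H = (RtoC Emax)%:M - N1^t* *m N1.
Proof. by rewrite -hN1' opprB addrC subrK. Qed.

Lemma energy_lo rho Ua Ub : separable rho -> unitary Ua -> unitary Ub ->
  complex.Re (\tr (D rho Ua Ub *m H)) = E0 + complex.Re (\tr (D rho Ua Ub *m (N0^t* *m N0))).
Proof.
move=> sep uA uB; have [t1 _ _] := sep_energy N0 sep uA uB.
rewrite {1}hN0 mulmxDr mxtraceD mul_mx_scalar mxtraceZ t1 mulr1 raddfD addrC //.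
Qed.

Lemma energy_hi rho Ua Ub : separable rho -> unitary Ua -> unitary Ub ->
  complex.Re (\tr (D rho Ua Ub *m H)) = Emax - complex.Re (\tr (D rho Ua Ub *m (N1^t* *m N1))).
Proof.
move=> sep uA uB; have [t1 _ _] := sep_energy N1 sep uA uB.
rewrite {1}hN1 mulmxBr linearB /= mul_mx_scalar mxtraceZ t1 mulr1 raddfB //.
Qed.

Lemma energy_bnd rho x : separable rho -> local_energies rho H x -> E0 <= x <= Emax.
Proof.
move=> sep [Ua [Ub [uA [uB ->]]]].
have [_ p0 _] := sep_energy N0 sep uA uB; have [_ p1 _] := sep_energy N1 sep uA uB.
rewrite {1}(energy_lo sep uA uB) (energy_hi sep uA uB).
by rewrite lerDl gerBl !ge0_Re.
Qed.

Lemma energy_ne rho : (local_energies rho H !=set0)%classic.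
Proof.
exists (complex.Re (\tr (D rho 1%:M 1%:M *m H))), 1%:M, 1%:M.
by split; [exact: unitary1|split; [exact: unitary1|]].
Qed.

Lemma has_sup_E rho : separable rho -> has_sup (local_energies rho H).
Proof.
move=> sep; split; first exact: energy_ne.
by exists Emax => x /(energy_bnd sep)/andP[].
Qed.

Lemma has_inf_E rho : separable rho -> has_inf (local_energies rho H).
Proof.
move=> sep; split; first exact: energy_ne.
by exists E0 => x /(energy_bnd sep)/andP[].
Qed.

Lemma sup_le rho : separable rho -> sup (local_energies rho H) <= Emax.
Proof. by move=> sep; apply: ge_sup; [exact: energy_ne|move=> x /(energy_bnd sep)/andP[]]. Qed.

Lemma inf_ge rho : separable rho -> E0 <= inf (local_energies rho H).
Proof. by move=> sep; apply: lb_le_inf; [exact: energy_ne|move=> x /(energy_bnd sep)/andP[]]. Qed.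

Lemma CP_le rho : separable rho -> CP rho H <= Emax - E0.
Proof. by move=> sep; rewrite /CP lerB // ?sup_le ?inf_ge. Qed.

Lemma norm_eig E (x : 'cV[C]_da) (y : 'cV[C]_db) : x != 0 -> y != 0 ->
  H *m (x *t y) = RtoC E *: (x *t y) ->
  exists (u : 'cV[C]_da) (w : 'cV[C]_db), [/\ n2 u = 1, n2 w = 1 & H *m (u *t w) = RtoC E *: (u *t w)].
Proof.
move=> x0 y0 hE.
have pos m (z : 'cV[C]_m) : z != 0 -> 0 < complex.Re (n2 z).
  move=> z0; rewrite lt_def ge0_Re ?n2_ge0 // andbT; apply: contra z0 => /eqP e.
  by apply/eqP/n2_eq0; rewrite (ge0_ReE (n2_ge0 z)) e.
exists ((sqrtC ((complex.Re (n2 x))%:C)%C)^-1 *: x), ((sqrtC ((complex.Re (n2 y))%:C)%C)^-1 *: y).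
split; [apply: normalize; [exact: ge0_ReE (n2_ge0 x)|exact: pos]|
        apply: normalize; [exact: ge0_ReE (n2_ge0 y)|exact: pos]|].
by rewrite tens_scalel tens_scaler scalerA -scalemxAr hE !scalerA mulrC.
Qed.

Lemma unit_ex m (a : 'I_m) : exists x : 'cV[C]_m, n2 x = 1.
Proof.
exists (delta_mx a 0); rewrite n2E (bigD1 a) //= big1 ?addr0; last first.
  by move=> i /negbTE ia; rewrite mxE ia /= normr0 expr0n.
by rewrite mxE !eqxx /= normr1 expr1n.
Qed.

Lemma sep_ex : exists rho : 'M[C]_(da * db), separable rho.
Proof.
have [v hv v0] := eigenvalueP hmin.1.
have [j _] : exists j : 'I_(da * db), v 0 j != 0.
  apply/existsP; apply: contraR v0 => /existsPn h0; apply/eqP/rowP => j.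
  by rewrite mxE; apply/eqP; have := h0 j; rewrite negbK.
case: (mxtens_indexP j) => a b.
have [x hx] := unit_ex a; have [y hy] := unit_ex b.
by exists ((x *m x^t*) *t (y *m y^t*)); exact: prod_sep.
Qed.

Lemma S_ub : forall x, [set x | exists rho, separable rho /\ x = CP rho H]%classic x -> x <= Emax - E0.
Proof. by move=> x [rho [sep ->]]; exact: CP_le. Qed.

Lemma has_sup_S : has_sup [set x | exists rho, separable rho /\ x = CP rho H]%classic.
Proof.
split; last by exists (Emax - E0); exact: S_ub.
by have [rho sep] := sep_ex; exists (CP rho H), rho.
Qed.

Lemma backward : eigenspace_has_product_vector H E0 ->
  eigenspace_has_product_vector H Emax -> CP1 H = Emax - E0.
Proof.
move=> [x0 [y0 [nx0 [ny0 e0]]]] [x1 [y1 [nx1 [ny1 e1]]]].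
have [u0 [w0 [hu0 hw0 f0]]] := norm_eig nx0 ny0 e0.
have [u1 [w1 [hu1 hw1 f1]]] := norm_eig nx1 ny1 e1.
have [Ua [uA hA]] := unit_map hu0 hu1.
have [Ub [uB hB]] := unit_map hw0 hw1.
set rho := (u0 *m u0^t*) *t (w0 *m w0^t*).
have sep : separable rho by exact: prod_sep.
have En0 : local_energies rho H E0.
  exists 1%:M, 1%:M; split; [exact: unitary1|split; [exact: unitary1|]].
  rewrite prod_energy !mul1mx (eig_qf f0) //; by rewrite n2_tens hu0 hw0 mulr1.
have En1 : local_energies rho H Emax.
  exists Ua, Ub; split => //; split => //.
  rewrite prod_energy hA hB (eig_qf f1) //; by rewrite n2_tens hu1 hw1 mulr1.
have sE : sup (local_energies rho H) = Emax.
  apply/le_anti; rewrite sup_le //=; exact: sup_upper_bound (has_sup_E sep) _ En1.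
have iE : inf (local_energies rho H) = E0.
  apply/le_anti; rewrite inf_ge // andbT; exact: ge_inf (has_inf_E sep).2 _ En0.
have CPe : CP rho H = Emax - E0 by rewrite /CP sE iE.
apply/le_anti; apply/andP; split.
  by apply: ge_sup; [exact: has_sup_S.1|exact: S_ub].
by apply: sup_upper_bound; [exact: has_sup_S|exists rho].
Qed.

Lemma n2_nz m (u : 'cV[C]_m) : n2 u = 1 -> u != 0.
Proof.
move=> hu; apply/eqP => u0; move: hu; rewrite u0 /n2 mulmx0 mxE => /eqP.
by rewrite eq_sym oner_eq0.
Qed.

Lemma near_CP eps : CP1 H = Emax - E0 -> 0 < eps ->
  exists rho, separable rho /\ Emax - E0 - eps < CP rho H.
Proof.
move=> hCP e0; have [x [rho [sep ->]] hx] := sup_adherent e0 has_sup_S.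
by exists rho; split => //; rewrite -hCP.
Qed.

Lemma forward_min : CP1 H = Emax - E0 -> eigenspace_has_product_vector H E0.
Proof.
move=> hCP.
have nmin : forall eps : R, 0 < eps -> exists (u : 'cV[C]_da) (w : 'cV[C]_db),
      [/\ n2 u = 1, n2 w = 1 & complex.Re (qf (u *t w) (N0^t* *m N0)) < eps].
  move=> eps e0; have [rho [sep hr]] := near_CP hCP e0.
  have sl := sup_le sep; have il := inf_ge sep.
  move: hr; rewrite /CP => hr.
  have e2 : 0 < E0 + eps - inf (local_energies rho H) by lra.
  have [x [Ua [Ub [uA [uB ->]]]] hx] := inf_adherent e2 (has_inf_E sep).
  have [_ _ c] := sep_energy N0 sep uA uB; apply: c.
  move: hx; rewrite (energy_lo sep uA uB) => hx; lra.
have [u [w [hu hw hq]]] := compact_min nmin.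
exists u, w; split; [exact: n2_nz|split; [exact: n2_nz|]].
have := qf_gram_eq0 hq; rewrite hN0 mulmxDl => ->.
by rewrite add0r mul_scalar_mx.
Qed.

Lemma forward_max : CP1 H = Emax - E0 -> eigenspace_has_product_vector H Emax.
Proof.
move=> hCP.
have nmax : forall eps : R, 0 < eps -> exists (u : 'cV[C]_da) (w : 'cV[C]_db),
      [/\ n2 u = 1, n2 w = 1 & complex.Re (qf (u *t w) (N1^t* *m N1)) < eps].
  move=> eps e0; have [rho [sep hr]] := near_CP hCP e0.
  have sl := sup_le sep; have il := inf_ge sep.
  move: hr; rewrite /CP => hr.
  have e2 : 0 < sup (local_energies rho H) - (Emax - eps) by lra.
  have [x [Ua [Ub [uA [uB ->]]]] hx] := sup_adherent e2 (has_sup_E sep).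
  have [_ _ c] := sep_energy N1 sep uA uB; apply: c.
  move: hx; rewrite (energy_hi sep uA uB) => hx; lra.
have [u [w [hu hw hq]]] := compact_min nmax.
exists u, w; split; [exact: n2_nz|split; [exact: n2_nz|]].
have := qf_gram_eq0 hq; rewrite hN1 mulmxBl => ->.
by rewrite subr0 mul_scalar_mx.
Qed.

End Main.
Theorem mainTheorem2 (R : realType) (da db : nat) (H : 'M[R[i]]_(da * db))
  (E0 Emax : R) :
  is_hermitian H ->
  is_min_eigenvalue H E0 ->
  is_max_eigenvalue H Emax ->
  (CP1 H = Emax - E0 <->
   eigenspace_has_product_vector H E0 /\ eigenspace_has_product_vector H Emax).
Proof.
move=> hH hmin hmax.
have [N0 hN0] := herm_lower hH (lo_spec hH hmin).
have [N1 hN1] := herm_upper hH (hi_spec hH hmax).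
split.
  move=> hCP; split; [exact: (forward_min hmin hN0 hN1 hCP)|exact: (forward_max hmin hN0 hN1 hCP)].
by case=> h0 h1; exact: (backward hmin hN0 hN1 h0 h1).
Qed.
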